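(* Let $\mathcal{P}=(V_1,\dots,V_k)$ be an $\varepsilon$-regular $k$-partition of an $n$-vertex graph $G$, and let $d_{ij}:=\frac{w_G(V_i,V_j)}{|V_i||V_j|}$. For each $F\subseteq\binom{[k]}{2}$ and each $ab\in F$, all but at most $2k\sqrt{\varepsilon}\,|V_a||V_b|$ pairs $(x_a,x_b)\in V_a\times V_b$ satisfy $$\sum_g\hom_g(F,G)=\Big(\prod_{i\in[k]\setminus\{a,b\}}|V_i|\Big)\Big(w_G(x_a,x_b)\prod_{ij\in F\setminus\{ab\}}d_{ij}\ \pm\ \sqrt{\varepsilon}\,|F|\Big),$$ where the sum is over all $\mathcal{P}$-maps $g\colon[k]\to V(G)$ with $g(a)=x_a$ and $g(b)=x_b$, and ''$\pm c$'' means that the two sides differ by at most $\big(\prod_{i\ne a,b}|V_i|\big)c$.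
   Context: For a graph $G$, $w_G(u,v)=1$ if $uv\in E(G)$ and $0$ otherwise; $w_G(U,V)=\sum_{u\in U}\sum_{v\in V}w_G(u,v)$. A bipartite graph $(V_1,V_2,E)$ with density $d=w(V_1,V_2)/(|V_1||V_2|)$ is $\varepsilon$-homogeneous if for all $W_1\subseteq V_1$, $W_2\subseteq V_2$: $|w(W_1,W_2)-d|W_1||W_2||\le\varepsilon|V_1||V_2|$. An $\varepsilon$-regular $k$-partition of an $n$-vertex graph $G$ is a partition $V_1,\dots,V_k$ of $V(G)$ with $|V_i|\in\{\lfloor n/k\rfloor,\lceil n/k\rceil\}$ such that for all $i\ne j$ the bipartite graph between $V_i,V_j$ formed by edges of $G$ is $\varepsilon$-homogeneous. A graph $F$ on vertex set $[k]$ is identified with its edge set $F\subseteq\binom{[k]}{2}$. A $\mathcal{P}$-map is a function $g\colon[k]\to V(G)$ with $g(i)\in V_i$ for all $i$, and $\hom_g(F,G)=\prod_{ij\in F}w_G(g(i),g(j))$. *)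

(* Defs.v *)
From HB Require Import structures.
From mathcomp Require Import all_boot all_order all_algebra.
Set Implicit Arguments. Unset Strict Implicit. Unset Printing Implicit Defensive.
Import Order.TTheory GRing.Theory Num.Theory.
Local Open Scope ring_scope.

Definition simple_graph (V : finType) (e : rel V) : Prop :=
  (forall x y, e x y = e y x) /\ (forall x, ~~ e x x).

Definition wG (R : ringType) (V : finType) (e : rel V) (u v : V) : R :=
  if e u v then 1 else 0.

Definition wGs (R : ringType) (V : finType) (e : rel V) (U W : {set V}) : R :=
  \sum_(u in U) \sum_(v in W) wG R e u v.

Definition dens (R : fieldType) (V : finType) (e : rel V) (U W : {set V}) : R :=
  wGs R e U W / (#|U|%:R * #|W|%:R).

Definition homogeneous (R : realFieldType) (V : finType) (e : rel V)
    (eps : R) (U W : {set V}) : Prop :=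
  forall W1 W2 : {set V}, W1 \subset U -> W2 \subset W ->
    `| wGs R e W1 W2 - dens R e U W * (#|W1|%:R * #|W2|%:R) |
      <= eps * (#|U|%:R * #|W|%:R).

(* The partition is given by a class map part : V -> 'I_k; V_i = part^{-1}(i). *)
Definition cls (V : finType) (k : nat) (part : V -> 'I_k) (i : 'I_k) : {set V} :=
  [set v | part v == i].

Definition eps_regular_partition (R : realFieldType) (V : finType) (e : rel V)
    (eps : R) (k : nat) (part : V -> 'I_k) : Prop :=
  (forall i : 'I_k, #|cls part i| = (#|V| %/ k)%N \/
                    #|cls part i| = (#|V| %/ k + ((#|V| %% k) != 0%N))%N) /\
  (forall i j : 'I_k, i != j -> homogeneous e eps (cls part i) (cls part j)).

(* A graph F on [k] given as a symmetric irreflexive relation; its edges are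
   the pairs ij with i < j and F i j. *)
Definition nedges (k : nat) (F : rel 'I_k) : nat :=
  #|[set p : 'I_k * 'I_k | (p.1 < p.2)%N && F p.1 p.2]|.

Definition Pmap (V : finType) (k : nat) (part : V -> 'I_k) (g : {ffun 'I_k -> V}) : bool :=
  [forall i, part (g i) == i].

Definition homg (R : ringType) (V : finType) (e : rel V) (k : nat) (F : rel 'I_k)
    (g : {ffun 'I_k -> V}) : R :=
  \prod_(i < k) \prod_(j < k | (i < j)%N && F i j) wG R e (g i) (g j).

(* Main.v *)
Require Import Defs.
From HB Require Import structures.
From mathcomp Require Import all_boot all_order all_algebra.
From mathcomp Require Import ring lra.
Import Order.TTheory GRing.Theory Num.Theory.
Local Open Scope ring_scope.
Set Implicit Arguments. Unset Strict Implicit. Unset Printing Implicit Defensive.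


Lemma sum_setI (R : realFieldType) (V : finType) (A : {set V}) (P : pred V) (c : V -> R) :
  \sum_(u in [set u in A | P u]) c u = \sum_(u in A) (if P u then c u else 0).
Proof.
rewrite big_mkcond [RHS]big_mkcond; apply: eq_bigr => u _.
by rewrite inE; case: (u \in A); case: (P u).
Qed.

Lemma lin_up (R : realFieldType) (V : finType) (A : {set V}) (c al : V -> R) :
  (forall u, 0 <= al u <= 1) ->
  \sum_(u in A) al u * c u <= \sum_(u in [set u in A | 0 <= c u]) c u.
Proof.
move=> hal; rewrite sum_setI.
apply: ler_sum => u _.
have /andP[h0 h1] := hal u.
case: (boolP (0 <= c u)) => hc.
  by rewrite -[X in _ <= X]mul1r ler_wpM2r.
by rewrite mulr_ge0_le0 // ltW // ltNge.
Qed.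


Lemma bilin_up (R : realFieldType) (V : finType) (A B : {set V}) (h : V -> V -> R) (M : R)
    (al be : V -> R) :
  (forall u, 0 <= al u <= 1) -> (forall v, 0 <= be v <= 1) ->
  (forall W1 W2 : {set V}, W1 \subset A -> W2 \subset B ->
     \sum_(u in W1) \sum_(v in W2) h u v <= M) ->
  \sum_(u in A) \sum_(v in B) al u * be v * h u v <= M.
Proof.
move=> hal hbe hM.
set W1 := [set u in A | 0 <= \sum_(v in B) be v * h u v].
apply: (le_trans (y := \sum_(u in W1) \sum_(v in B) be v * h u v)).
  rewrite (eq_bigr (fun u => al u * \sum_(v in B) be v * h u v)); last first.
    by move=> u _; rewrite mulr_sumr; apply: eq_bigr => v _; rewrite mulrA.
  exact: lin_up.
rewrite exchange_big /=.
rewrite (eq_bigr (fun v => be v * \sum_(u in W1) h u v)); last first.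
  by move=> v _; rewrite mulr_sumr; apply: eq_bigr => u _.
have := lin_up B (fun v => \sum_(u in W1) h u v) hbe; move/le_trans; apply.
idtac.
rewrite exchange_big /=; apply: hM.
  by apply/subsetP => u; rewrite inE => /andP[].
by apply/subsetP => u; rewrite inE => /andP[].
Qed.

Lemma bilin_abs (R : realFieldType) (V : finType) (A B : {set V}) (h : V -> V -> R) (M : R)
    (al be : V -> R) :
  (forall u, 0 <= al u <= 1) -> (forall v, 0 <= be v <= 1) ->
  (forall W1 W2 : {set V}, W1 \subset A -> W2 \subset B ->
     `|\sum_(u in W1) \sum_(v in W2) h u v| <= M) ->
  `|\sum_(u in A) \sum_(v in B) al u * be v * h u v| <= M.
Proof.
move=> hal hbe hM; rewrite ler_norml; apply/andP; split; last first.
  apply: bilin_up => // W1 W2 s1 s2; exact: le_trans (ler_norm _) (hM _ _ s1 s2).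
rewrite lerNl.
have H : \sum_(u in A) \sum_(v in B) al u * be v * (- h u v) <= M.
  apply: (bilin_up (h := fun u v => - h u v)) => // W1 W2 s1 s2.
  rewrite (eq_bigr (fun u => - \sum_(v in W2) h u v)); last by move=> u _; rewrite sumrN.
  rewrite sumrN; apply: le_trans (hM _ _ s1 s2).
  by rewrite -normrN ler_norm.
apply: le_trans H; rewrite le_eqVlt; apply/orP; left; apply/eqP.
rewrite -sumrN; apply: eq_bigr => u _; rewrite -sumrN; apply: eq_bigr => v _.
by rewrite mulrN.
Qed.

Lemma L1_bound (R : realFieldType) (V : finType) (A B : {set V}) (h : V -> V -> R) (M : R)
    (be : V -> R) :
  (forall v, 0 <= be v <= 1) ->
  (forall W1 W2 : {set V}, W1 \subset A -> W2 \subset B ->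
     `|\sum_(u in W1) \sum_(v in W2) h u v| <= M) ->
  \sum_(u in A) `|\sum_(v in B) be v * h u v| <= 2 * M.
Proof.
move=> hbe hM.
set c := fun u => \sum_(v in B) be v * h u v.
have key : forall W : {set V}, W \subset A -> `|\sum_(u in W) c u| <= M.
  move=> W sW.
  have H : `|\sum_(u in W) \sum_(v in B) 1 * be v * h u v| <= M.
    apply: (bilin_abs (al := fun _ => 1)) => //; first by move=> _; rewrite ler01 lexx.
    move=> W1 W2 s1 s2; apply: hM => //; exact: subset_trans s1 sW.
  apply: le_trans H; rewrite le_eqVlt; apply/orP; left; apply/eqP; congr `|_|.
  by apply: eq_bigr => u _; rewrite /c; apply: eq_bigr => v _; rewrite mul1r.
rewrite (bigID (fun u => 0 <= c u)) /=.
have e1 : \sum_(u in A | 0 <= c u) `|c u| = \sum_(u in [set u in A | 0 <= c u]) c u.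
  rewrite sum_setI big_mkcondr /=; apply: eq_bigr => u _.
  by case: ifP => // hc; rewrite ger0_norm.
have e2 : \sum_(u in A | ~~ (0 <= c u)) `|c u| = - \sum_(u in [set u in A | ~~ (0 <= c u)]) c u.
  rewrite sum_setI big_mkcondr /= -sumrN; apply: eq_bigr => u _.
  case: ifP => hc; last by rewrite oppr0.
  by rewrite ler0_norm // ltW // ltNge hc.
have s1 : [set u in A | 0 <= c u] \subset A by apply/subsetP => u; rewrite inE => /andP[].
have s2 : [set u in A | ~~ (0 <= c u)] \subset A by apply/subsetP => u; rewrite inE => /andP[].
have k1 := key _ s1; have k2 := key _ s2.
rewrite e1 e2.
have := ler_norm (\sum_(u in [set u in A | 0 <= c u]) c u).
have := ler_norm (- \sum_(u in [set u in A | ~~ (0 <= c u)]) c u).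
rewrite normrN; lra.
Qed.


Definition sep (R : realFieldType) (V : finType) (Phi : V -> V -> R) :=
  exists al be : V -> R, (forall u, 0 <= al u <= 1) /\ (forall v, 0 <= be v <= 1) /\
    forall u v, Phi u v = al u * be v.

Lemma sep_mul (R : realFieldType) (V : finType) (P1 P2 : V -> V -> R) :
  sep P1 -> sep P2 -> sep (fun u v => P1 u v * P2 u v).
Proof.
move=> [a1 [b1 [ha1 [hb1 e1]]]] [a2 [b2 [ha2 [hb2 e2]]]].
exists (fun u => a1 u * a2 u), (fun v => b1 v * b2 v); split; [|split].
- move=> u; have /andP[x1 y1] := ha1 u; have /andP[x2 y2] := ha2 u.
  by rewrite mulr_ge0 //= mulr_ile1.
- move=> u; have /andP[x1 y1] := hb1 u; have /andP[x2 y2] := hb2 u.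
  by rewrite mulr_ge0 //= mulr_ile1.
- by move=> u v; rewrite e1 e2; ring.
Qed.

Lemma sep1 (R : realFieldType) (V : finType) : sep (fun _ _ : V => (1 : R)).
Proof.
exists (fun _ => 1), (fun _ => 1); split; [|split] => //; try by move=> _; rewrite ler01 lexx.
by move=> u v; rewrite mulr1.
Qed.

Lemma sep_ext (R : realFieldType) (V : finType) (P1 P2 : V -> V -> R) :
  (forall u v, P1 u v = P2 u v) -> sep P1 -> sep P2.
Proof.
move=> e [a [b [ha [hb h]]]]; exists a, b; split; [|split] => // u v.
by rewrite -e h.
Qed.

Lemma sep_big (R : realFieldType) (V : finType) (I : Type) (r : seq I) (P : pred I)
   (phi : I -> V -> V -> R) :
  (forall i, P i -> sep (phi i)) -> sep (fun u v => \prod_(i <- r | P i) phi i u v).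
Proof.
move=> hs; elim: r => [|x r IH].
  by apply: sep_ext (@sep1 R V) => u v; rewrite big_nil.
case: (boolP (P x)) => Px.
  by apply: sep_ext (sep_mul (hs _ Px) IH) => u v; rewrite big_cons Px.
by apply: sep_ext IH => u v; rewrite big_cons (negbTE Px).
Qed.

Lemma sep_u (R : realFieldType) (V : finType) (Phi : V -> V -> R) :
  (forall u v, 0 <= Phi u v <= 1) -> (forall u v, Phi u v = Phi u u) -> sep Phi.
Proof.
move=> h01 he; exists (fun u => Phi u u), (fun _ => 1); split; [|split] => //.
by move=> _; rewrite ler01 lexx.
by move=> u v; rewrite mulr1.
Qed.

Lemma sep_v (R : realFieldType) (V : finType) (Phi : V -> V -> R) :
  (forall u v, 0 <= Phi u v <= 1) -> (forall u v, Phi u v = Phi v v) -> sep Phi.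
Proof.
move=> h01 he; exists (fun _ => 1), (fun v => Phi v v); split; [|split] => //.
by move=> _; rewrite ler01 lexx.
by move=> u v; rewrite mul1r.
Qed.

Definition upd1 (V : finType) (k : nat) (g : {ffun 'I_k -> V}) (i : 'I_k) (u : V) :
  {ffun 'I_k -> V} := [ffun t => if t == i then u else g t].

Definition famb (V : finType) (k : nat) (Q : 'I_k -> {set V}) (g : {ffun 'I_k -> V}) :=
  [forall t, g t \in Q t].

Lemma upd1K (V : finType) (k : nat) (g : {ffun 'I_k -> V}) i u :
  upd1 (upd1 g i u) i (g i) = g.
Proof.
by apply/ffunP => t; rewrite !ffunE; case: eqP => // ->.
Qed.

Lemma upd1_at (V : finType) (k : nat) (g : {ffun 'I_k -> V}) i u : upd1 g i u i = u.
Proof. by rewrite ffunE eqxx. Qed.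

Lemma famb_upd1 (V : finType) (k : nat) (Q : 'I_k -> {set V}) g i u :
  famb Q (upd1 g i u) && (g i \in Q i) = famb Q g && (u \in Q i).
Proof.
apply/idP/idP.
  move=> /andP[/forallP h1 h2]; apply/andP; split.
    apply/forallP => t; have := h1 t; rewrite ffunE; case: eqP => [->|] //.
  by have := h1 i; rewrite ffunE eqxx.
move=> /andP[/forallP h1 h2]; apply/andP; split; last exact: h1.
by apply/forallP => t; rewrite ffunE; case: eqP => [->|] //.
Qed.

Lemma resum (R : realFieldType) (V : finType) (k : nat) (Q : 'I_k -> {set V}) (i : 'I_k)
   (G : {ffun 'I_k -> V} -> R) :
  \sum_(g | famb Q g) \sum_(u in Q i) G (upd1 g i u) = #|Q i|%:R * \sum_(g | famb Q g) G g.
Proof.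
rewrite mulr_sumr.
rewrite [RHS](eq_bigr (fun g => \sum_(u in Q i) G g)); last first.
  by move=> g _; rewrite sumr_const mulr_natl.
rewrite !pair_big_dep /=.
pose phi (p : {ffun 'I_k -> V} * V) := (upd1 p.1 i p.2, p.1 i).
have phiK : involutive phi.
  by move=> [g u] /=; rewrite /phi /= upd1K upd1_at.
rewrite [RHS](reindex_inj (inv_inj phiK)) /=.
apply: eq_big => [[g u]|[g u] _] /=; last by [].
by rewrite famb_upd1.
Qed.


Lemma famb_empty (V : finType) (k : nat) (Q : 'I_k -> {set V}) i g :
  #|Q i| = 0%N -> famb Q g = false.
Proof.
move=> h0; apply/negbTE/negP => /forallP /(_ i).
by rewrite (card0_eq h0).
Qed.

Lemma edge_step (R : realFieldType) (V : finType) (k : nat) (Q : 'I_k -> {set V})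
   (i j : 'I_k) (h : V -> V -> R) (K : {ffun 'I_k -> V} -> R) (eps : R) :
  i != j -> 0 <= eps ->
  (forall g, sep (fun u v => K (upd1 (upd1 g i u) j v))) ->
  (forall W1 W2 : {set V}, W1 \subset Q i -> W2 \subset Q j ->
     `|\sum_(u in W1) \sum_(v in W2) h u v| <= eps * (#|Q i|%:R * #|Q j|%:R)) ->
  `|\sum_(g | famb Q g) h (g i) (g j) * K g| <= eps * \sum_(g | famb Q g) 1.
Proof.
move=> nij he hsep hcut.
case: (posnP #|Q i|) => [hi0|hipos].
  by rewrite !big_pred0 ?normr0 ?mulr0 // => g; rewrite (famb_empty _ hi0).
case: (posnP #|Q j|) => [hj0|hjpos].
  by rewrite !big_pred0 ?normr0 ?mulr0 // => g; rewrite (famb_empty _ hj0).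
pose n : R := #|Q i|%:R * #|Q j|%:R.
have npos : 0 < n by rewrite /n mulr_gt0 // ltr0n.
pose H := fun g : {ffun 'I_k -> V} => h (g i) (g j) * K g.
have E : n * \sum_(g | famb Q g) H g =
   \sum_(g | famb Q g) \sum_(u in Q i) \sum_(v in Q j) H (upd1 (upd1 g i u) j v).
  rewrite (resum Q i (fun g' => \sum_(v in Q j) H (upd1 g' j v))) resum /n mulrA //.
have E2 : forall g, \sum_(u in Q i) \sum_(v in Q j) H (upd1 (upd1 g i u) j v) <=
     `|\sum_(u in Q i) \sum_(v in Q j) H (upd1 (upd1 g i u) j v)| by move=> g; exact: ler_norm.
have B : forall g, `|\sum_(u in Q i) \sum_(v in Q j) H (upd1 (upd1 g i u) j v)| <= eps * n.
  move=> g; have [al [be [hal [hbe hK]]]] := hsep g.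
  have -> : \sum_(u in Q i) \sum_(v in Q j) H (upd1 (upd1 g i u) j v) =
            \sum_(u in Q i) \sum_(v in Q j) al u * be v * h u v.
    apply: eq_bigr => u _; apply: eq_bigr => v _.
    rewrite /H hK !ffunE eqxx (negbTE nij) eqxx mulrC //.
  exact: bilin_abs.
have : n * `|\sum_(g | famb Q g) H g| <= n * (eps * \sum_(g | famb Q g) 1).
  have n0 := ltW npos.
  rewrite -[n in n * _ <= _](ger0_norm n0) -normrM E.
  apply: le_trans; first exact: ler_norm_sum.
  rewrite mulr_sumr mulr_sumr; apply: ler_sum => g _.
  by rewrite mulr1 mulrC; exact: B.
by rewrite ler_pM2l.
Qed.

From mathcomp Require Import zify.

Lemma pair_cases (k : nat) (p q : 'I_k * 'I_k) :
  (p.1 < p.2)%N -> (q.1 < q.2)%N -> q != p ->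
  ((q.1 != p.2) && (q.2 != p.2)) || ((q.1 != p.1) && (q.2 != p.1)).
Proof.
move: p q => [p1 p2] [q1 q2] /= h1 h2.
rewrite xpair_eqE -!val_eqE /=.
lia.
Qed.

Lemma upd2E (V : finType) (k : nat) (g : {ffun 'I_k -> V}) (i j t : 'I_k) u v :
  upd1 (upd1 g i u) j v t = if t == j then v else if t == i then u else g t.
Proof. by rewrite !ffunE. Qed.

Lemma counting (R : realFieldType) (V : finType) (k : nat) (Q : 'I_k -> {set V})
   (fw : 'I_k -> V -> R) (w : V -> V -> R) (dd : 'I_k * 'I_k -> R) (eps : R)
   (s : seq ('I_k * 'I_k)) :
  0 <= eps -> (forall u v, 0 <= w u v <= 1) -> (forall i v, 0 <= fw i v <= 1) ->
  uniq s -> (forall p, p \in s -> (p.1 < p.2)%N) -> (forall p, p \in s -> 0 <= dd p <= 1) ->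
  (forall p, p \in s -> forall W1 W2 : {set V}, W1 \subset Q p.1 -> W2 \subset Q p.2 ->
     `|\sum_(u in W1) \sum_(v in W2) (w u v - dd p)| <= eps * (#|Q p.1|%:R * #|Q p.2|%:R)) ->
  `|\sum_(g | famb Q g) (\prod_(p <- s) w (g p.1) (g p.2)) * \prod_i fw i (g i)
    - (\prod_(p <- s) dd p) * \sum_(g | famb Q g) \prod_i fw i (g i)|
   <= (size s)%:R * eps * \sum_(g | famb Q g) 1.
Proof.
move=> he hw hfw; elim: s => [|p s IH].
  move=> _ _ _ _; rewrite !big_nil /=.
  under eq_bigr do rewrite big_nil mul1r.
  by rewrite mul1r subrr normr0 mul0r mul0r.
move=> /= /andP[pns us] hlt hdd hcut.
have hlt' : forall q, q \in s -> (q.1 < q.2)%N by move=> q hq; apply: hlt; rewrite inE hq orbT.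
have hdd' : forall q, q \in s -> 0 <= dd q <= 1 by move=> q hq; apply: hdd; rewrite inE hq orbT.
have hcut' := fun q hq => hcut q (mem_behead hq : q \in p :: s).
have IHs := IH us hlt' hdd' hcut'.
have hp : p \in p :: s by rewrite inE eqxx.
have plt := hlt p hp.
have pne : p.1 != p.2 by rewrite -val_eqE /= neq_ltn plt.
pose K := fun g : {ffun 'I_k -> V} => (\prod_(q <- s) w (g q.1) (g q.2)) * \prod_i fw i (g i).
set Y := \sum_(g | famb Q g) \prod_i fw i (g i).
set N1 := \sum_(g | famb Q g) (1 : R).
have N1ge : 0 <= N1 by apply: sumr_ge0 => g _; exact: ler01.
have split : \sum_(g | famb Q g) (\prod_(q <- p :: s) w (g q.1) (g q.2)) * \prod_i fw i (g i)
   - (\prod_(q <- p :: s) dd q) * Y =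
   \sum_(g | famb Q g) (w (g p.1) (g p.2) - dd p) * K g +
   dd p * (\sum_(g | famb Q g) K g - (\prod_(q <- s) dd q) * Y).
  rewrite big_cons mulrBr mulrA addrA; congr (_ - _).
  rewrite mulr_sumr -big_split /=; apply: eq_bigr => g _.
  by rewrite /K big_cons; ring.
rewrite split.
have T1 : `|\sum_(g | famb Q g) (w (g p.1) (g p.2) - dd p) * K g| <= eps * N1.
  apply: (edge_step (h := fun u v => w u v - dd p)) => //; last exact: hcut.
  move=> g; apply: sep_mul.
    apply: (@sep_ext _ _ (fun u v => \prod_(q <- s | q \in s)
              w (upd1 (upd1 g p.1 u) p.2 v q.1) (upd1 (upd1 g p.1 u) p.2 v q.2))).
      by move=> u v; rewrite -big_seq.
    apply: sep_big => q qs.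
    have qne : q != p by apply: contraNneq pns => <-.
    have := pair_cases plt (hlt' q qs) qne.
    case/orP => /andP[h1 h2].
      apply: sep_u => [u v|u v]; first exact: hw.
      by rewrite !upd2E (negbTE h1) (negbTE h2).
    apply: sep_v => [u v|u v]; first exact: hw.
    by rewrite !upd2E (negbTE h1) (negbTE h2).
  apply: (@sep_ext _ _ (fun u v => \prod_(i | true) fw i (upd1 (upd1 g p.1 u) p.2 v i))).
    by [].
  apply: sep_big => i _.
  case: (boolP (i == p.2)) => hi.
    apply: sep_v => [u v|u v]; first exact: hfw.
    by rewrite !upd2E hi.
  apply: sep_u => [u v|u v]; first exact: hfw.
  by rewrite !upd2E (negbTE hi).
have /andP[d0 d1] := hdd p hp.
have T2 : `|dd p * (\sum_(g | famb Q g) K g - (\prod_(q <- s) dd q) * Y)| <=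
          (size s)%:R * eps * N1.
  rewrite normrM (ger0_norm d0).
  apply: le_trans (_ : 1 * _ <= _); last by rewrite mul1r.
  by apply: ler_pM => //; exact: IHs.
apply: le_trans; first exact: ler_normD.
rewrite /= -addn1 natrD.
have : 0 <= (size s)%:R * eps * N1 by rewrite mulr_ge0 // mulr_ge0.
move: T1 T2; set A1 := `| _ |; set A2 := `| _ |.
move=> T1 T2 _.
have -> : ((size s)%:R + 1) * eps * N1 = (size s)%:R * eps * N1 + eps * N1 by ring.
by rewrite addrC lerD.
Qed.


Lemma decomp4 (T : Type) (idx : T) (op : Monoid.com_law idx) (k : nat) (a b : 'I_k)
   (psi : 'I_k -> 'I_k -> T) :
  a != b ->
  \big[op/idx]_i \big[op/idx]_j psi i j =
  op (op (psi a a) (op (psi a b) (\big[op/idx]_(j | (j != a) && (j != b)) psi a j)))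
   (op (op (psi b a) (op (psi b b) (\big[op/idx]_(j | (j != a) && (j != b)) psi b j)))
    (op (\big[op/idx]_(i | (i != a) && (i != b)) psi i a)
     (op (\big[op/idx]_(i | (i != a) && (i != b)) psi i b)
      (\big[op/idx]_(i | (i != a) && (i != b)) \big[op/idx]_(j | (j != a) && (j != b)) psi i j)))).
Proof.
move=> nab.
have row : forall i, \big[op/idx]_j psi i j =
   op (psi i a) (op (psi i b) (\big[op/idx]_(j | (j != a) && (j != b)) psi i j)).
  by move=> i; rewrite (bigD1 a) // (bigD1 b) //= 1?eq_sym.
rewrite [LHS](bigD1 a) //= [X in op _ X](bigD1 b) /=; last by rewrite eq_sym.
rewrite !row; congr (op (op _ (op _ _)) (op (op _ (op _ _)) _)).
by under eq_bigr do rewrite row; rewrite !big_split.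
Qed.


Definition Es (k : nat) (F : rel 'I_k) (a b : 'I_k) : {set 'I_k * 'I_k} :=
  [set p : 'I_k * 'I_k | [&& (p.1 != a), (p.1 != b), (p.2 != a), (p.2 != b),
                            (p.1 < p.2)%N & F p.1 p.2]].

Lemma rest_pairs (T : Type) (idx : T) (op : Monoid.com_law idx) (k : nat) (F : rel 'I_k)
   (a b : 'I_k) (phi : 'I_k -> 'I_k -> T) :
  \big[op/idx]_(i | (i != a) && (i != b)) \big[op/idx]_(j | (j != a) && (j != b))
     (if (i < j)%N && F i j then phi i j else idx) =
  \big[op/idx]_(p <- enum (Es F a b)) phi p.1 p.2.
Proof.
rewrite pair_big_dep big_enum /= big_mkcond /=.
rewrite [RHS]big_mkcond; apply: eq_bigr => [[i j]] _ /=.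
rewrite inE /=.
by case: (i != a); case: (i != b); case: (j != a); case: (j != b); case: (i < j)%N; case: (F i j).
Qed.

Lemma edge_decomp (R : comNzRingType) (k : nat) (F : rel 'I_k) (a b : 'I_k)
   (phi : 'I_k -> 'I_k -> R) :
  a != b -> (forall i j, F i j = F j i) -> (forall i, ~~ F i i) -> F a b ->
  (forall i j, phi i j = phi j i) ->
  \prod_(i < k) \prod_(j < k | (i < j)%N && F i j) phi i j =
  phi a b * ((\prod_(p <- enum (Es F a b)) phi p.1 p.2) *
      \prod_(j < k | (j != a) && (j != b))
         ((if F a j then phi a j else 1) * (if F b j then phi b j else 1))).
Proof.
move=> nab hFs hFi hab hphi.
rewrite [LHS](eq_bigr (fun i : 'I_k => \prod_(j < k) (if (i < j)%N && F i j then phi i j else 1)));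
  last by move=> i _; rewrite big_mkcond.
rewrite (decomp4 _ (fun i j : 'I_k => if (i < j)%N && F i j then phi i j else 1) nab) /=.
rewrite rest_pairs big_split /=.
have hrow : forall c, \prod_(j < k | (j != a) && (j != b)) (if F c j then phi c j else 1) =
   \prod_(j < k | (j != a) && (j != b)) (if (c < j)%N && F c j then phi c j else 1) *
   \prod_(j < k | (j != a) && (j != b)) (if (j < c)%N && F j c then phi j c else 1).
  move=> c; rewrite -big_split /=; apply: eq_big => // j /andP[ja jb].
  rewrite (hFs j c) (hphi j c).
  case: (ltngtP c j) => hcj; rewrite ?mulr1 ?mul1r //.
  have -> : c = j by apply: val_inj.
  by rewrite (negbTE (hFi j)) /=.
rewrite !hrow !ltnn /= (hFs b a) hab (hphi b a).
case: (ltngtP a b) => hlt /=; first ring.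
  ring.
by move/val_inj: hlt nab => ->; rewrite eqxx.
Qed.


Lemma nedges_decomp (k : nat) (F : rel 'I_k) (a b : 'I_k) :
  a != b -> (forall i j, F i j = F j i) -> (forall i, ~~ F i i) -> F a b ->
  nedges F = (1 + \sum_(j < k | (j != a) && (j != b)) (F a j + F b j) + #|Es F a b|)%N.
Proof.
move=> nab hFs hFi hab.
rewrite /nedges -sum1_card.
rewrite (eq_bigl (fun p : 'I_k * 'I_k => (p.1 < p.2)%N && F p.1 p.2)); last by move=> p; rewrite inE.
rewrite big_mkcond /= -(pair_bigA _ (fun i j : 'I_k => if (i < j)%N && F i j then 1%N else 0%N)) /=.
rewrite (decomp4 _ (fun i j : 'I_k => if (i < j)%N && F i j then 1%N else 0%N) nab) /=.
rewrite rest_pairs big_const_seq /= count_predT -cardE.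
have hrow : forall c, \sum_(j < k | (j != a) && (j != b)) (F c j : nat) =
   (\sum_(j < k | (j != a) && (j != b)) (if (c < j)%N && F c j then 1 else 0) +
   \sum_(j < k | (j != a) && (j != b)) (if (j < c)%N && F j c then 1 else 0))%N.
  move=> c; rewrite -big_split /=; apply: eq_big => // j /andP[ja jb].
  rewrite (hFs j c).
  case: (ltngtP c j) => hcj /=; first by case: (F c j).
    by case: (F c j).
  have -> : c = j by apply: val_inj.
  by rewrite (negbTE (hFi j)).
rewrite big_split /= !hrow !ltnn /= (hFs b a) hab iter_addn_0 mul1n.
case: (ltngtP a b) => hlt /=.
- ring.
- ring.
- by move/val_inj: hlt nab => ->; rewrite eqxx.
Qed.


Lemma prod_diff (R : realFieldType) (I : Type) (r : seq I) (P : pred I) (x z : I -> R) :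
  (forall i, P i -> 0 <= x i <= 1) -> (forall i, P i -> 0 <= z i <= 1) ->
  `|\prod_(i <- r | P i) x i - \prod_(i <- r | P i) z i| <= \sum_(i <- r | P i) `|x i - z i|.
Proof.
move=> hx hz; elim: r => [|j r IH]; first by rewrite !big_nil subrr normr0.
rewrite !big_cons; case: (boolP (P j)) => Pj //.
have /andP[x0 x1] := hx j Pj; have /andP[z0 z1] := hz j Pj.
set X := \prod_(i <- r | P i) x i; set Z := \prod_(i <- r | P i) z i.
have X0 : 0 <= X by apply: prodr_ge0 => i Pi; have /andP[] := hx i Pi.
have X1 : X <= 1 by apply: prodr_ile1.
have -> : x j * X - z j * Z = (x j - z j) * X + z j * (X - Z) by ring.
apply: le_trans; first exact: ler_normD.
rewrite !normrM (ger0_norm X0) (ger0_norm z0).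
apply: lerD.
  by rewrite -[X in _ <= X]mulr1 ler_wpM2l.
apply: le_trans (_ : 1 * `|X - Z| <= _); last by rewrite mul1r.
by rewrite ler_wpM2r.
Qed.

Lemma wG01 (R : realFieldType) (V : finType) (e : rel V) u v : 0 <= wG R e u v <= 1.
Proof. by rewrite /wG; case: (e u v); rewrite ?lexx ?ler01. Qed.

Lemma wG_sym (R : realFieldType) (V : finType) (e : rel V) u v :
  simple_graph e -> wG R e u v = wG R e v u.
Proof. by case=> hs _; rewrite /wG (hs u v). Qed.

Lemma wGs_sym (R : realFieldType) (V : finType) (e : rel V) U W :
  simple_graph e -> wGs R e U W = wGs R e W U.
Proof.
move=> hsg; rewrite /wGs exchange_big; apply: eq_bigr => u _; apply: eq_bigr => v _.
exact: wG_sym.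
Qed.

Lemma dens_sym (R : realFieldType) (V : finType) (e : rel V) U W :
  simple_graph e -> dens R e U W = dens R e W U.
Proof. by move=> hsg; rewrite /dens (wGs_sym R U W hsg) [(#|U|%:R * _)]mulrC. Qed.

Lemma dens01 (R : realFieldType) (V : finType) (e : rel V) U W : 0 <= dens R e U W <= 1.
Proof.
have h0 : 0 <= wGs R e U W.
  by apply: sumr_ge0 => u _; apply: sumr_ge0 => v _; have /andP[] := wG01 R e u v.
have h1 : wGs R e U W <= #|U|%:R * #|W|%:R.
  apply: le_trans (_ : \sum_(u in U) \sum_(v in W) (1 : R) <= _).
    by apply: ler_sum => u _; apply: ler_sum => v _; have /andP[] := wG01 R e u v.
  by rewrite sumr_const sumr_const [X in _ <= X]mulr_natl.
rewrite /dens; apply/andP; split; first by rewrite divr_ge0 // mulr_ge0.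
have [->|n0] := eqVneq (#|U|%:R * #|W|%:R : R) 0; first by rewrite invr0 mulr0 ler01.
have npos : 0 < (#|U|%:R * #|W|%:R : R) by rewrite lt0r n0 mulr_ge0.
by rewrite ler_pdivrMr // mul1r.
Qed.

Lemma hom_cut (R : realFieldType) (V : finType) (e : rel V) (eps : R) (U W : {set V}) :
  homogeneous e eps U W ->
  forall W1 W2 : {set V}, W1 \subset U -> W2 \subset W ->
  `|\sum_(u in W1) \sum_(v in W2) (wG R e u v - dens R e U W)| <= eps * (#|U|%:R * #|W|%:R).
Proof.
move=> hh W1 W2 s1 s2.
have E1 : dens R e U W * (#|W1|%:R * #|W2|%:R) =
      \sum_(u in W1) \sum_(v in W2) dens R e U W.
  by rewrite sumr_const sumr_const -mulrnA -natrM mulr_natr mulnC.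
have E2 : \sum_(u in W1) \sum_(v in W2) (wG R e u v - dens R e U W) =
   wGs R e W1 W2 - \sum_(u in W1) \sum_(v in W2) dens R e U W.
  rewrite /wGs -sumrB; apply: eq_bigr => u _.
  by rewrite sumrB.
rewrite E2 -E1.
exact: hh.
Qed.


Lemma sum_fam (R : realFieldType) (V : finType) (k : nat) (Q : 'I_k -> {set V})
   (f : 'I_k -> V -> R) :
  \sum_(g | famb Q g) \prod_i f i (g i) = \prod_i \sum_(v in Q i) f i v.
Proof.
rewrite [RHS](bigA_distr_big_dep (fun i v => v \in Q i) f).
apply: eq_bigl => g; apply/forallP/familyP => h t; exact: h.
Qed.

Lemma split_ab (R : comNzRingType) (k : nat) (a b : 'I_k) (G : 'I_k -> R) :
  a != b -> \prod_i G i = G a * G b * \prod_(i | (i != a) && (i != b)) G i.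
Proof.
move=> nab; rewrite (bigD1 a) //= (bigD1 b) /=; last by rewrite eq_sym.
by rewrite mulrA.
Qed.

Lemma err_j_bound (R : realFieldType) (V : finType) (A B C : {set V}) (w : V -> V -> R)
   (fa fb : bool) (da db eps : R) :
  (0 < #|C|)%N -> (forall u v, 0 <= w u v <= 1) -> 0 <= db <= 1 ->
  (fa -> forall W1 W2 : {set V}, W1 \subset A -> W2 \subset C ->
     `|\sum_(u in W1) \sum_(v in W2) (w u v - da)| <= eps * (#|A|%:R * #|C|%:R)) ->
  (fb -> forall W1 W2 : {set V}, W1 \subset B -> W2 \subset C ->
     `|\sum_(u in W1) \sum_(v in W2) (w u v - db)| <= eps * (#|B|%:R * #|C|%:R)) ->
  \sum_(x in A) \sum_(y in B)
     `|(\sum_(v in C) (if fa then w x v else 1) * (if fb then w y v else 1)) / #|C|%:R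
        - (if fa then da else 1) * (if fb then db else 1)|
  <= 2 * eps * (fa%:R + fb%:R) * (#|A|%:R * #|B|%:R).
Proof.
move=> Cpos hw hdb hA hB.
have cpos : 0 < (#|C|%:R : R) by rewrite ltr0n.
pose al x v := if fa then w x v else 1.
pose be y v := if fb then w y v else 1.
pose ca := if fa then da else 1.
pose cb := if fb then db else 1.
have cb01 : 0 <= cb <= 1 by rewrite /cb; case: ifP => _ //; rewrite ler01 lexx.
have al01 : forall x v, 0 <= al x v <= 1 by move=> x v; rewrite /al; case: ifP => _ //; rewrite ler01 lexx.
have pt : forall x y,
   `|(\sum_(v in C) al x v * be y v) / #|C|%:R - ca * cb|
   <= `|\sum_(v in C) al x v * (be y v - cb)| / #|C|%:R
      + `|\sum_(v in C) (al x v - ca)| / #|C|%:R.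
  move=> x y.
  have E : (\sum_(v in C) al x v * be y v) / #|C|%:R - ca * cb =
     (\sum_(v in C) al x v * (be y v - cb)) / #|C|%:R
      + cb * ((\sum_(v in C) (al x v - ca)) / #|C|%:R).
    have S1 : \sum_(v in C) al x v * (be y v - cb) =
              \sum_(v in C) al x v * be y v - cb * \sum_(v in C) al x v.
      by rewrite mulr_sumr -sumrB; apply: eq_bigr => v _; ring.
    have S2 : \sum_(v in C) (al x v - ca) = \sum_(v in C) al x v - ca * #|C|%:R.
      by rewrite sumrB sumr_const mulr_natr.
    rewrite S1 S2; field; by rewrite lt0r_neq0.
  rewrite E; apply: le_trans; first exact: ler_normD.
  have /andP[cb0 cb1] := cb01.
  apply: lerD; first by rewrite normrM normfV (gtr0_norm cpos).
  rewrite normrM normrM normfV (gtr0_norm cpos) (ger0_norm cb0).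
  rewrite -[X in _ <= X]mul1r; apply: ler_wpM2r => //.
  by rewrite mulr_ge0 // invr_ge0 ltW.
have B1 : \sum_(x in A) \sum_(y in B) (`|\sum_(v in C) al x v * (be y v - cb)| / #|C|%:R)
    <= 2 * eps * fb%:R * (#|A|%:R * #|B|%:R).
  case: (boolP fb) => hfb.
    have hB' := hB hfb.
    apply: (le_trans (y := \sum_(x in A) (2 * eps * #|B|%:R))).
      apply: ler_sum => x _; rewrite -mulr_suml ler_pdivrMr //.
      have := L1_bound (A := B) (B := C) (h := fun y v => w y v - db) (be := al x) (al01 x) hB'.
      rewrite /be /cb hfb.
      move=> H; apply: le_trans H _; rewrite le_eqVlt; apply/orP; left; apply/eqP; ring.
    rewrite sumr_const -mulr_natr /=; rewrite le_eqVlt; apply/orP; left; apply/eqP; ring.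
  rewrite /be /cb (negbTE hfb) mulr0 mul0r big1 // => x _; rewrite big1 // => y _.
  by rewrite big1 ?normr0 ?mul0r // => v _; rewrite subrr mulr0.
have B2 : \sum_(x in A) \sum_(y in B) (`|\sum_(v in C) (al x v - ca)| / #|C|%:R)
    <= 2 * eps * fa%:R * (#|A|%:R * #|B|%:R).
  case: (boolP fa) => hfa.
    have hA' := hA hfa.
    apply: (le_trans (y := \sum_(x in A) (#|B|%:R * (`|\sum_(v in C) (al x v - ca)| / #|C|%:R)))).
      by apply: ler_sum => x _; rewrite sumr_const mulr_natl.
    rewrite -mulr_sumr -mulr_suml.
    have h1 : forall v : V, 0 <= (fun _ : V => (1:R)) v <= 1 by move=> _; rewrite ler01 lexx.
    have H := L1_bound (A := A) (B := C) (h := fun x v => w x v - da) h1 hA'.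
    rewrite /al /ca hfa /=.
    have H2 : (\sum_(x in A) `|\sum_(v in C) (w x v - da)|) / #|C|%:R <= 2 * eps * #|A|%:R.
      have E : \sum_(x in A) `|\sum_(v in C) 1 * (w x v - da)| =
               \sum_(x in A) `|\sum_(v in C) (w x v - da)|.
        by apply: eq_bigr => x _; congr `|_|; apply: eq_bigr => v _; rewrite mul1r.
      rewrite E in H.
      rewrite ler_pdivrMr //; apply: le_trans H _.
      rewrite le_eqVlt; apply/orP; left; apply/eqP; ring.
    have Bge : 0 <= (#|B|%:R : R) by [].
    have := ler_wpM2l Bge H2.
    move=> H3; apply: le_trans H3 _; rewrite le_eqVlt; apply/orP; left; apply/eqP; ring.
  rewrite /al /ca (negbTE hfa) mulr0 mul0r big1 // => x _; rewrite big1 // => y _.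
  by rewrite big1 ?normr0 ?mul0r // => v _; rewrite subrr.
apply: (le_trans (y := \sum_(x in A) \sum_(y in B)
   (`|\sum_(v in C) al x v * (be y v - cb)| / #|C|%:R
      + `|\sum_(v in C) (al x v - ca)| / #|C|%:R))).
  by apply: ler_sum => x _; apply: ler_sum => y _; exact: pt.
under eq_bigr do rewrite big_split /=.
rewrite big_split /=.
apply: le_trans; first exact: lerD B1 B2.
rewrite le_eqVlt; apply/orP; left; apply/eqP; ring.
Qed.


Definition Qxy (V : finType) (k : nat) (part : V -> 'I_k) (a b : 'I_k) (x y : V) : 'I_k -> {set V} :=
  fun i => if i == a then [set x] else if i == b then [set y] else cls part i.

Definition fwxy (R : realFieldType) (V : finType) (e : rel V) (k : nat) (F : rel 'I_k) (a b : 'I_k)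
   (x y : V) : 'I_k -> V -> R :=
  fun j v => if (j != a) && (j != b) then
      (if F a j then wG R e x v else 1) * (if F b j then wG R e y v else 1) else 1.

Definition Errxy (R : realFieldType) (V : finType) (e : rel V) (k : nat) (part : V -> 'I_k)
   (F : rel 'I_k) (a b : 'I_k) (x y : V) : R :=
  \sum_(j < k | (j != a) && (j != b))
    `|(\sum_(v in cls part j) fwxy R e F a b x y j v) / #|cls part j|%:R
      - (if F a j then dens R e (cls part a) (cls part j) else 1) *
        (if F b j then dens R e (cls part b) (cls part j) else 1)|.

Lemma pair_bound (R : rcfType) (V : finType) (e : rel V) (eps : R) (k : nat)
    (part : V -> 'I_k) (F : rel 'I_k) (a b : 'I_k) (x y : V) :
  simple_graph e ->
  (forall i j : 'I_k, i != j -> homogeneous e eps (cls part i) (cls part j)) ->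
  (forall i j, F i j = F j i) -> (forall i, ~~ F i i) -> F a b -> 0 <= eps ->
  (forall j, (j != a) && (j != b) -> (0 < #|cls part j|)%N) ->
  x \in cls part a -> y \in cls part b ->
  let Vc := cls part in
  let d i j := dens R e (Vc i) (Vc j) in
  let P := \prod_(i < k | (i != a) && (i != b)) (#|Vc i|%:R : R) in
  `| \sum_(g : {ffun 'I_k -> V} | Pmap part g && (g a == x) && (g b == y))
               homg R e F g
             - P * (wG R e x y *
                    \prod_(i < k) \prod_(j < k | (i < j)%N && F i j &&
                         ~~ (((i == a) && (j == b)) || ((i == b) && (j == a)))) d i j) |
   <= P * (#|Es F a b|%:R * eps + Errxy R e part F a b x y).
Proof.
move=> hsg hhom hFs hFi hab he hpos xa yb; cbv beta zeta.
set P := \prod_(i < k | _) _.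
have nab : a != b by apply: contraTneq hab => ->; rewrite (negbTE (hFi b)).
set Q := Qxy part a b x y.
set fw := fwxy R e F a b x y.
set s := enum (Es F a b).
have Qa : Q a = [set x] by rewrite /Q /Qxy eqxx.
have Qb : Q b = [set y] by rewrite /Q /Qxy eq_sym (negbTE nab) eqxx.
have Qr : forall j, (j != a) && (j != b) -> Q j = cls part j.
  by move=> j /andP[ja jb]; rewrite /Q /Qxy (negbTE ja) (negbTE jb).
have famE : forall g : {ffun 'I_k -> V},
    (Pmap part g && (g a == x) && (g b == y)) = famb Q g.
  move=> g; apply/idP/idP.
    move=> /andP[/andP[/forallP hP /eqP gax] /eqP gby]; apply/forallP => t.
    rewrite /Q /Qxy; case: (eqVneq t a) => [->|ta]; first by rewrite gax set11.
    case: (eqVneq t b) => [->|tb]; first by rewrite gby set11.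
    by rewrite /cls inE.
  move=> /forallP hf.
  have gax : g a = x by have := hf a; rewrite Qa => /set1P.
  have gby : g b = y by have := hf b; rewrite Qb => /set1P.
  rewrite gax gby !eqxx !andbT; apply/forallP => t.
  case: (eqVneq t a) => [->|ta]; first by rewrite gax; move: xa; rewrite /cls inE.
  case: (eqVneq t b) => [->|tb]; first by rewrite gby; move: yb; rewrite /cls inE.
  by have := hf t; rewrite Qr ?ta ?tb // /cls inE.
rewrite (eq_bigl _ _ famE).
have wsym : forall u v, wG R e u v = wG R e v u by move=> u v; exact: wG_sym.
have fwrest : forall g : {ffun 'I_k -> V},
   \prod_i fw i (g i) = \prod_(j < k | (j != a) && (j != b))
       ((if F a j then wG R e x (g j) else 1) * (if F b j then wG R e y (g j) else 1)).
  move=> g; rewrite [RHS]big_mkcond; apply: eq_bigr => j _.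
  by rewrite /fw /fwxy; case: ifP.
have homE : forall g : {ffun 'I_k -> V}, famb Q g ->
   homg R e F g = wG R e x y * ((\prod_(p <- s) wG R e (g p.1) (g p.2)) * \prod_i fw i (g i)).
  move=> g /forallP hf.
  have gax : g a = x by have := hf a; rewrite Qa => /set1P.
  have gby : g b = y by have := hf b; rewrite Qb => /set1P.
  rewrite /homg (edge_decomp (phi := fun i j => wG R e (g i) (g j)) nab hFs hFi hab); last first.
    by move=> i j; apply: wsym.
  by rewrite fwrest gax gby.
rewrite (eq_bigr _ homE) -mulr_sumr.
pose C := fun i j : 'I_k => ((i == a) && (j == b)) || ((i == b) && (j == a)).
pose phi := fun i j : 'I_k => if C i j then 1 else dens R e (cls part i) (cls part j).
have dE : \prod_(i < k) \prod_(j < k | (i < j)%N && F i j &&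
                         ~~ (((i == a) && (j == b)) || ((i == b) && (j == a))))
           dens R e (cls part i) (cls part j) =
   (\prod_(p <- s) dens R e (cls part p.1) (cls part p.2)) *
   \prod_(j < k | (j != a) && (j != b))
     ((if F a j then dens R e (cls part a) (cls part j) else 1) *
      (if F b j then dens R e (cls part b) (cls part j) else 1)).
  rewrite (eq_bigr (fun i : 'I_k => \prod_(j < k | (i < j)%N && F i j) phi i j)); last first.
    move=> i _; rewrite big_mkcondr /=; apply: eq_bigr => j _.
    by rewrite /phi /C; case: ifP => [/negbTE -> //|/negbFE ->].
  rewrite (edge_decomp (phi := phi) nab hFs hFi hab); last first.
    move=> i j; rewrite /phi /C [(j == a) && _]andbC [(j == b) && _]andbC orbC.
    by case: ifP => // _; apply: dens_sym.
  have -> : phi a b = 1 by rewrite /phi /C !eqxx.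
  rewrite mul1r; congr (_ * _).
    rewrite big_seq_cond [RHS]big_seq_cond; apply: eq_bigr => p /andP[ps _].
    move: ps; rewrite /s mem_enum inE => /and5P[h1 h2 _ _ _].
    by rewrite /phi /C (negbTE h1) (negbTE h2).
  apply: eq_bigr => j /andP[ja jb].
  by rewrite /phi /C (negbTE jb) (negbTE ja) !andbF.
have hposR : forall j, (j != a) && (j != b) -> (#|cls part j|%:R : R) != 0.
  by move=> j hj; rewrite pnatr_eq0 -lt0n hpos.
have fwa : fw a x = 1 by rewrite /fw /fwxy eqxx.
have fwb : fw b y = 1 by rewrite /fw /fwxy eqxx andbF.
have YE : \sum_(g | famb Q g) \prod_i fw i (g i) =
   P * \prod_(j < k | (j != a) && (j != b)) ((\sum_(v in cls part j) fw j v) / #|cls part j|%:R).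
  rewrite sum_fam (split_ab _ nab) Qa Qb !big_set1 fwa fwb !mul1r /P -big_split /=.
  apply: eq_bigr => j hj; rewrite (Qr j hj) mulrC divfK //; exact: hposR.
have N1E : \sum_(g | famb Q g) (1 : R) = P.
  have E : \sum_(g | famb Q g) (1 : R) = \sum_(g | famb Q g) \prod_(i < k) (1 : R).
    by apply: eq_bigr => g _; rewrite big1_eq.
  rewrite E (sum_fam Q (fun _ _ => (1 : R))).
  rewrite (split_ab _ nab) Qa Qb !sumr_const !cards1 /= !mul1r /P.
  by apply: eq_bigr => j hj; rewrite (Qr j hj) sumr_const.
have fw01 : forall i v, 0 <= fw i v <= 1.
  move=> i v; rewrite /fw /fwxy; case: ifP => _; last by rewrite ler01 lexx.
  have h1 : 0 <= (if F a i then wG R e x v else 1) <= 1.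
    by case: ifP => _; [exact: wG01 | rewrite ler01 lexx].
  have h2 : 0 <= (if F b i then wG R e y v else 1) <= 1.
    by case: ifP => _; [exact: wG01 | rewrite ler01 lexx].
  move: h1 h2 => /andP[h1 h1'] /andP[h2 h2'].
  by rewrite mulr_ge0 //= mulr_ile1.
have smem : forall p, p \in s -> [&& (p.1 != a), (p.1 != b), (p.2 != a), (p.2 != b),
                            (p.1 < p.2)%N & F p.1 p.2].
  by move=> p; rewrite /s mem_enum inE.
have slt : forall p, p \in s -> (p.1 < p.2)%N.
  by move=> p /smem /and5P[_ _ _ _ /andP[]].
have scut : forall p, p \in s -> forall W1 W2 : {set V}, W1 \subset Q p.1 -> W2 \subset Q p.2 ->
     `|\sum_(u in W1) \sum_(v in W2) (wG R e u v - dens R e (cls part p.1) (cls part p.2))|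
       <= eps * (#|Q p.1|%:R * #|Q p.2|%:R).
  move=> p ps; have /and5P[h1 h2 h3 h4 /andP[h5 _]] := smem p ps.
  rewrite (Qr p.1) ?h1 ?h2 // (Qr p.2) ?h3 ?h4 //.
  apply: hom_cut; apply: hhom.
  by rewrite -val_eqE /= neq_ltn h5.
have CNT := counting (Q := Q) (fw := fw) (w := wG R e)
   (dd := fun p => dens R e (cls part p.1) (cls part p.2)) (s := s) he (@wG01 R V e) fw01
   (enum_uniq _) slt (fun p _ => dens01 R e _ _) scut.
rewrite YE N1E in CNT.
rewrite /s -cardE in CNT.
rewrite dE.
set Sg := \sum_(g | famb Q g) _ in CNT *.
set Ds := \prod_(p <- enum _) dens R e _ _ in CNT *.
set XX := \prod_(j < k | _) (_ / _) in CNT *.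
set Cc := \prod_(j < k | _) (_ * _).
set w := wG R e x y.
have /andP[w0 w1] : 0 <= w <= 1 by exact: wG01.
have Ds0 : 0 <= Ds by apply: prodr_ge0 => p _; have /andP[] := dens01 R e (cls part p.1) (cls part p.2).
have Ds1 : Ds <= 1 by apply: prodr_ile1 => p _; exact: dens01.
have P0 : 0 <= P by apply: prodr_ge0 => j _; exact: ler0n.
have PD : `|XX - Cc| <= Errxy R e part F a b x y.
  rewrite /Errxy; apply: prod_diff => j hj.
    have Vpos : 0 < (#|cls part j|%:R : R) by rewrite ltr0n hpos.
    apply/andP; split; first by rewrite divr_ge0 // sumr_ge0 // => v _; have /andP[] := fw01 j v.
    rewrite ler_pdivrMr // mul1r.
    apply: le_trans (_ : \sum_(v in cls part j) (1 : R) <= _); last by rewrite sumr_const.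
    by apply: ler_sum => v _; have /andP[] := fw01 j v.
  have hA : 0 <= (if F a j then dens R e (cls part a) (cls part j) else 1) <= 1.
    by case: ifP => _; [exact: dens01 | rewrite ler01 lexx].
  have hB : 0 <= (if F b j then dens R e (cls part b) (cls part j) else 1) <= 1.
    by case: ifP => _; [exact: dens01 | rewrite ler01 lexx].
  move: hA hB => /andP[hA hA'] /andP[hB hB'].
  by rewrite mulr_ge0 //= mulr_ile1.
have -> : w * Sg - P * (w * (Ds * Cc)) = w * (Sg - Ds * (P * XX)) + w * Ds * P * (XX - Cc) by ring.
apply: le_trans; first exact: ler_normD.
have t1 : `|w * (Sg - Ds * (P * XX))| <= #|Es F a b|%:R * eps * P.
  rewrite normrM (ger0_norm w0) -[X in _ <= X]mul1r.
  by apply: ler_pM => //.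
have t2 : `|w * Ds * P * (XX - Cc)| <= P * Errxy R e part F a b x y.
  rewrite normrM [`|w * Ds * P|]ger0_norm ?mulr_ge0 //.
  apply: ler_pM => //; first by rewrite mulr_ge0 // mulr_ge0.
  rewrite -[X in _ <= X]mul1r; apply: ler_wpM2r => //.
  by rewrite mulr_ile1.
apply: le_trans; first exact: lerD t1 t2.
rewrite le_eqVlt; apply/orP; left; apply/eqP; ring.
Qed.

Lemma err_sum (R : realFieldType) (V : finType) (e : rel V) (eps : R) (k : nat)
    (part : V -> 'I_k) (F : rel 'I_k) (a b : 'I_k) :
  (forall i j : 'I_k, i != j -> homogeneous e eps (cls part i) (cls part j)) ->
  (forall j, (j != a) && (j != b) -> (0 < #|cls part j|)%N) ->
  \sum_(x in cls part a) \sum_(y in cls part b) Errxy R e part F a b x y <=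
  2 * eps * (\sum_(j < k | (j != a) && (j != b)) ((F a j)%:R + (F b j)%:R)) *
    (#|cls part a|%:R * #|cls part b|%:R).
Proof.
move=> hhom hpos; rewrite /Errxy.
under eq_bigr do rewrite exchange_big /=.
rewrite exchange_big /= mulr_sumr mulr_suml; apply: ler_sum => j /andP[ja jb].
have E : forall x y, (\sum_(v in cls part j) fwxy R e F a b x y j v) =
   \sum_(v in cls part j) (if F a j then wG R e x v else 1) * (if F b j then wG R e y v else 1).
  by move=> x y; apply: eq_bigr => v _; rewrite /fwxy ja jb.
under eq_bigr do under eq_bigr do rewrite E.
apply: err_j_bound.
- by apply: hpos; rewrite ja jb.
- by move=> u v; exact: wG01.
- exact: dens01.
- by move=> _; apply: hom_cut; apply: hhom; rewrite eq_sym.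
- by move=> _; apply: hom_cut; apply: hhom; rewrite eq_sym.
Qed.

Unset Implicit Arguments. Set Strict Implicit.

Theorem lemma40 (R : rcfType) (V : finType) (e : rel V) (eps : R) (k : nat)
    (part : V -> 'I_k) (F : rel 'I_k) (a b : 'I_k) :
  simple_graph e ->
  eps_regular_partition e eps part ->
  (forall i j, F i j = F j i) -> (forall i, ~~ F i i) ->
  F a b ->
  let Vc := cls part in
  let d i j := dens R e (Vc i) (Vc j) in
  let P := \prod_(i < k | (i != a) && (i != b)) (#|Vc i|%:R : R) in
  #|[set x : V * V | (x.1 \in Vc a) && (x.2 \in Vc b) &&
      ~~ (`| \sum_(g : {ffun 'I_k -> V} | Pmap part g && (g a == x.1) && (g b == x.2))
               homg R e F g
             - P * (wG R e x.1 x.2 *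
                    \prod_(i < k) \prod_(j < k | (i < j)%N && F i j &&
                         ~~ (((i == a) && (j == b)) || ((i == b) && (j == a)))) d i j) |
          <= P * (Num.sqrt eps * (nedges F)%:R))]|%:R
  <= 2 * k%:R * Num.sqrt eps * (#|Vc a|%:R * #|Vc b|%:R).
Proof.
move=> hsg [hsize hhom] hFs hFi hab; cbv beta zeta.
set bad := [set x : V * V | _].
have nab : a != b by apply: contraTneq hab => ->; rewrite (negbTE (hFi b)).
have k1 : (1 <= k)%N by move: (ltn_ord a); lia.
have k1R : 1 <= (k%:R : R) by rewrite ler1n.
set W := (#|cls part a|%:R * #|cls part b|%:R : R).
have W0 : 0 <= W by rewrite mulr_ge0.
set se := Num.sqrt eps.
have se0 : 0 <= se by exact: sqrtr_ge0.
have RHS0 : 0 <= 2 * k%:R * se * W by rewrite !mulr_ge0 // ler0n.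
have badsub : bad \subset setX (cls part a) (cls part b).
  by apply/subsetP => p; rewrite !inE => /andP[/andP[-> ->]].
have emptyC : (forall p, p \in bad -> False) -> (#|bad|%:R : R) <= 2 * k%:R * se * W.
  move=> hn; suff -> : #|bad| = 0%N by [].
  by apply/eqP; rewrite cards_eq0; apply/eqP/setP => p; rewrite in_set0; apply/negP => /hn.
case: (ltrP eps 0) => [eneg|epos].
  apply: emptyC => p; rewrite !inE => /andP[/andP[pa pb] _].
  have := hhom a b nab set0 set0 (sub0set _) (sub0set _).
  rewrite /wGs !big_set0 !cards0 /= mul0r mulr0 subr0 normr0.
  have Wpos : 0 < W.
    rewrite /W; apply: mulr_gt0; rewrite ltr0n card_gt0; apply/set0Pn.
      by exists p.1; rewrite /cls inE.
    by exists p.2; rewrite /cls inE.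
  move=> h; have h2 : 0 <= eps * W := h; nra.
case: (lerP eps 1) => [ele1|egt1]; last first.
  have s1 : 1 <= se by rewrite /se -(sqrtr1 R) ler_sqrt // ltW.
  apply: le_trans (_ : W <= _).
    by rewrite /W -natrM -cardsX ler_nat subset_leq_card.
  have h1 : 1 <= k%:R * se by nra.
  have -> : 2 * k%:R * se * W = 2 * (k%:R * se) * W by ring.
  nra.
have [P0|Pn0] := eqVneq (\prod_(i < k | (i != a) && (i != b)) (#|cls part i|%:R : R)) 0.
  apply: emptyC => p; rewrite !inE => /andP[/andP[pa pb] hn].
  move: hn; rewrite P0.
  move/eqP/prodf_eq0: P0 => [j hj]; rewrite pnatr_eq0 cards_eq0 => /eqP j0.
  rewrite big_pred0 ?mul0r ?subrr ?normr0 ?lexx //.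
  move=> g; apply/negbTE; apply/negP => /andP[/andP[/forallP /(_ j) hgj _] _].
  have : g j \in cls part j by rewrite /cls inE.
  by rewrite j0 in_set0.
set Pe := \prod_(i < k | (i != a) && (i != b)) (#|cls part i|%:R : R) in Pn0 *.
have hpos : forall j, (j != a) && (j != b) -> (0 < #|cls part j|)%N.
  move=> j hj; rewrite lt0n; apply: contra Pn0 => /eqP c0.
  by rewrite /Pe (bigD1 j) //= c0 mul0r.
have Ppos : 0 < Pe by rewrite lt0r Pn0 /Pe prodr_ge0 // => j _; exact: ler0n.
set N2 := \sum_(j < k | (j != a) && (j != b)) ((F a j)%:R + (F b j)%:R : R).
have N20 : 0 <= N2 by apply: sumr_ge0 => j _; rewrite addr_ge0.
have nE : ((nedges F)%:R : R) = 1 + N2 + #|Es F a b|%:R.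
  rewrite (nedges_decomp nab hFs hFi hab) !natrD natr_sum /N2; congr (_ + _ + _).
  by apply: eq_bigr => j _; rewrite natrD.
have esq : se ^+ 2 = eps by rewrite /se sqr_sqrtr.
have se1 : se <= 1 by rewrite /se -(sqrtr1 R) ler_sqrt.
have eps_le : eps <= se by rewrite -esq expr2; nra.
have hhom' : forall i j : 'I_k, i != j -> homogeneous e eps (cls part i) (cls part j) := hhom.
have key : forall p, p \in bad -> se * (1 + N2) < Errxy R e part F a b p.1 p.2.
  move=> p; rewrite !inE => /andP[/andP[pa pb] hn].
  have pa' : p.1 \in cls part a by rewrite /cls inE.
  have pb' : p.2 \in cls part b by rewrite /cls inE.
  have H := pair_bound hsg hhom' hFs hFi hab epos hpos pa' pb'.
  cbv beta zeta in H; rewrite -/Pe in H.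
  rewrite -ltNge in hn.
  have := lt_le_trans hn H; rewrite ltr_pM2l // nE => h.
  have : #|Es F a b|%:R * eps <= #|Es F a b|%:R * se by rewrite ler_wpM2l.
  move=> hh; rewrite -/se in h; nra.
have Errge0 : forall x y, 0 <= Errxy R e part F a b x y.
  by move=> x y; apply: sumr_ge0 => j _; exact: normr_ge0.
have sumbad : \sum_(p in bad) Errxy R e part F a b p.1 p.2 <= 2 * eps * N2 * W.
  apply: le_trans (_ : \sum_(p in setX (cls part a) (cls part b)) Errxy R e part F a b p.1 p.2 <= _).
    rewrite [X in _ <= X](bigID (fun p => p \in bad)) /=.
    have -> : \sum_(p in setX (cls part a) (cls part b) | p \in bad) Errxy R e part F a b p.1 p.2
            = \sum_(p in bad) Errxy R e part F a b p.1 p.2.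
      by apply: eq_bigl => p; rewrite andb_idl // => /(subsetP badsub).
    by rewrite lerDl sumr_ge0.
  have -> : \sum_(p in setX (cls part a) (cls part b)) Errxy R e part F a b p.1 p.2 =
     \sum_(x in cls part a) \sum_(y in cls part b) Errxy R e part F a b x y.
    by rewrite [RHS]pair_big_dep; apply: eq_bigl => p; rewrite !inE.
  exact: err_sum.
have [se_0|sen0] := eqVneq se 0.
  apply: emptyC => p pb.
  have h1 := key p pb.
  have h2 : Errxy R e part F a b p.1 p.2 <= \sum_(q in bad) Errxy R e part F a b q.1 q.2.
    by rewrite (bigD1 p) //= lerDl sumr_ge0.
  have e0 : eps = 0 by rewrite -esq se_0 expr2 mulr0.
  move: sumbad; rewrite e0 se_0 in h1 * => h3.
  have : 0 < 2 * 0 * N2 * W by apply: lt_le_trans h3; apply: lt_le_trans h2; rewrite mul0r in h1.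
  by rewrite mulr0 !mul0r ltxx.
have sepos : 0 < se by rewrite lt0r sen0 se0.
have h1 : #|bad|%:R * (se * (1 + N2)) <= 2 * eps * N2 * W.
  apply: le_trans sumbad.
  apply: le_trans (_ : \sum_(p in bad) se * (1 + N2) <= _).
    by rewrite sumr_const mulr_natl.
  by apply: ler_sum => p pb; apply: ltW; exact: key.
rewrite -esq in h1.
have h2 : #|bad|%:R * (1 + N2) <= 2 * se * N2 * W.
  rewrite -(ler_pM2l sepos).
  have e1 : se * (#|bad|%:R * (1 + N2)) = #|bad|%:R * (se * (1 + N2)) by ring.
  have e2 : se * (2 * se * N2 * W) = 2 * se ^+ 2 * N2 * W by ring.
  by rewrite e1 e2.
have h3 : #|bad|%:R * (1 + N2) <= (2 * se * W) * (1 + N2).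
  apply: le_trans h2 _.
  have : 0 <= 2 * se * W by rewrite !mulr_ge0.
  move=> hh; nra.
have h4 : (#|bad|%:R : R) <= 2 * se * W.
  by rewrite -(ler_pM2r (_ : 0 < 1 + N2)) // ltr_pwDl.
apply: le_trans h4 _.
have -> : 2 * k%:R * se * W = k%:R * (2 * se * W) by ring.
rewrite -[X in X <= _]mul1r; apply: ler_wpM2r => //.
by rewrite !mulr_ge0.
Qed.
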